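(* Let $X$ be a set. For every $\mathcal F\subseteq[0,1]^X$, \[\gamma_S(\alpha_S(\mathcal F))=\{\mathrm{op}\circ\langle\mathcal F\rangle\mid\mathrm{op}\colon[0,1]^{\mathcal F}\to[0,1]\text{ non-expansive w.r.t. the directed sup-metric}\},\] and $\alpha_S(\gamma_S(d))=d$ for every directed pseudo-metric $d$ on $X$.
   Context: $r\ominus s=\max\{0,r-s\}$, $r\oplus s=\min\{r+s,1\}$. A directed pseudo-metric on $X$ is $d\colon X\times X\to[0,1]$ with $d(x,x)=0$ and $d(x,z)\le d(x,y)\oplus d(y,z)$. $\alpha_S(\mathcal F)(x_1,x_2)=\bigvee_{f\in\mathcal F}(f(x_1)\ominus f(x_2))$; $\gamma_S(d)=\{f\in[0,1]^X\mid\forall x_1,x_2\colon f(x_1)\ominus f(x_2)\le d(x_1,x_2)\}$. $\langle\mathcal F\rangle\colon X\to[0,1]^{\mathcal F}$, $\langle\mathcal F\rangle(x)(f)=f(x)$. The directed sup-metric on $[0,1]^{\mathcal F}$ is $(u,v)\mapsto\sup_{f\in\mathcal F}(u(f)\ominus v(f))$, and $\mathrm{op}$ is non-expansive w.r.t. it if $\mathrm{op}(u)\ominus\mathrm{op}(v)\le\sup_{f}(u(f)\ominus v(f))$ for all $u,v$. *)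

(* Defs.v *)
From HB Require Import structures.
From mathcomp Require Import all_boot all_order all_algebra.
From mathcomp Require Import boolp classical_sets reals.
Set Implicit Arguments. Unset Strict Implicit. Unset Printing Implicit Defensive.
Import Order.TTheory GRing.Theory Num.Theory.
Local Open Scope ring_scope.
Local Open Scope classical_set_scope.

Section Defs.
Variable R : realType.

Definition monus (r s : R) : R := Num.max 0 (r - s).
Definition oplus (r s : R) : R := Num.min (r + s) 1.

Definition in01 (r : R) : Prop := 0 <= r <= 1.

(* [0,1]^T, as real-valued functions with values in [0,1] *)
Definition unitfun (T : Type) (f : T -> R) : Prop := forall t, in01 (f t).

Definition directed_pseudometric (X : Type) (d : X -> X -> R) : Prop :=
  (forall x y, in01 (d x y)) /\ (forall x, d x x = 0) /\
  (forall x y z, d x z <= oplus (d x y) (d y z)).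

(* alpha_S(F)(x1,x2) = \/_{f in F} (f x1 ⊖ f x2); the join in [0,1] of the
   empty family is 0 = sup set0 *)
Definition alphaS (X : Type) (F : set (X -> R)) : X -> X -> R :=
  fun x1 x2 => sup [set monus (f x1) (f x2) | f in F].

Definition gammaS (X : Type) (d : X -> X -> R) : set (X -> R) :=
  [set f | unitfun f /\ forall x1 x2, monus (f x1) (f x2) <= d x1 x2].

Definition tupling (X : Type) (F : set (X -> R)) : X -> ({f : X -> R | F f} -> R) :=
  fun x f => (proj1_sig f) x.

Definition dsup (T : Type) (u v : T -> R) : R :=
  sup [set monus (u t) (v t) | t in [set: T]].

Definition nonexp_op (T : Type) (op : (T -> R) -> R) : Prop :=
  (forall u, unitfun u -> in01 (op u)) /\
  (forall u v, unitfun u -> unitfun v -> monus (op u) (op v) <= dsup u v).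

End Defs.

(* Main.v *)
Require Import Defs.
From HB Require Import structures.
From mathcomp Require Import all_boot all_order all_algebra.
From mathcomp Require Import boolp classical_sets reals.
From mathcomp Require Import lra.
Import Order.TTheory GRing.Theory Num.Theory.
Local Open Scope ring_scope.
Local Open Scope classical_set_scope.

Section Helpers.
Variable R : realType.
Set Implicit Arguments. Unset Strict Implicit.

Lemma monus_le (r s b : R) : 0 <= b -> r - s <= b -> monus r s <= b.
Proof. by move=> h1 h2; rewrite /monus ge_max h1 h2. Qed.

Lemma le_monus (r s : R) : r - s <= monus r s.
Proof. by rewrite /monus le_max lexx orbT. Qed.

Lemma monus_ge0 (r s : R) : 0 <= monus r s.
Proof. by rewrite /monus le_max lexx. Qed.

Lemma oplus_le (r s : R) : oplus r s <= r + s.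
Proof. by rewrite /oplus ge_min lexx. Qed.

Lemma sup_le_bound (E : set R) b : (forall y, E y -> y <= b) -> 0 <= b -> sup E <= b.
Proof.
move=> H b0; case: (pselect (E !=set0)) => ne.
  by apply: ge_sup.
have -> : E = set0 by apply/seteqP; split => // y Ey; exfalso; apply: ne; exists y.
by rewrite sup0.
Qed.

Lemma sup_ub (E : set R) b y : (forall z, E z -> z <= b) -> E y -> y <= sup E.
Proof. by move=> H Ey; apply: ub_le_sup => //; exists b. Qed.

Lemma sup_ge0 (E : set R) : (forall z, E z -> 0 <= z) -> 0 <= sup E.
Proof.
move=> H; case: (pselect (has_sup E)) => hs; last by rewrite sup_out.
case: (hs) => [[y Ey] _]; apply: (le_trans (H y Ey)).
by apply: ub_le_sup => //; case: hs.
Qed.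

Lemma monus_le1 (r s : R) : in01 r -> in01 s -> monus r s <= 1.
Proof. move=> /andP[r0 r1] /andP[s0 s1]; apply: monus_le => //; lra. Qed.

Lemma dsup_ge0 (T : Type) (u v : T -> R) : 0 <= dsup u v.
Proof. by apply: sup_ge0 => z [t _ <-]; apply: monus_ge0. Qed.

Lemma dsup_ub (T : Type) (u v : T -> R) t : unitfun u -> unitfun v ->
  monus (u t) (v t) <= dsup u v.
Proof.
move=> hu hv; apply: (@sup_ub _ 1); last by exists t.
by move=> z [s _ <-]; apply: monus_le1.
Qed.

Lemma dsup_tri (T : Type) (a u v : T -> R) : unitfun a -> unitfun u -> unitfun v ->
  dsup a v <= dsup a u + dsup u v.
Proof.
move=> ha hu hv; apply: sup_le_bound; last first.
  by apply: addr_ge0; apply: dsup_ge0.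
move=> z [t _ <-]; apply: monus_le; first by apply: addr_ge0; apply: dsup_ge0.
have h1 := dsup_ub t ha hu; have h2 := dsup_ub t hu hv.
have h3 := le_monus (a t) (u t); have h4 := le_monus (u t) (v t); lra.
Qed.

Lemma dsup_refl (T : Type) (a : T -> R) : dsup a a <= 0.
Proof.
apply: sup_le_bound => // z [t _ <-]; apply: monus_le => //; lra.
Qed.

Lemma dsup_tupling (X : Type) (F : set (X -> R)) x1 x2 :
  dsup (@tupling R X F x1) (tupling x2) = alphaS F x1 x2.
Proof.
rewrite /dsup /alphaS; congr sup; apply/seteqP; split => r /=.
  by move=> [t _ <-]; exists (proj1_sig t) => //; apply: (proj2_sig t).
by move=> [f Ff <-]; exists (exist _ f Ff).
Qed.

Lemma tupling_unit (X : Type) (F : set (X -> R)) x :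
  F `<=` (@unitfun R X) -> unitfun (@tupling R X F x).
Proof. by move=> hF t; rewrite /tupling; apply: (hF _ (proj2_sig t)). Qed.

End Helpers.

Theorem mainTheorem13 (R : realType) (X : Type) :
  (forall F : set (X -> R), F `<=` (@unitfun R X) ->
     gammaS (alphaS F) =
     [set g | exists op : ({f : X -> R | F f} -> R) -> R,
                nonexp_op op /\ g = (fun x => op (tupling x))]) /\
  (forall d : X -> X -> R, directed_pseudometric d -> alphaS (gammaS d) = d).
Proof.
split.
  move=> F hF; apply/seteqP; split => g /=.
    move=> [ug Hg].
    pose op := fun u : {f : X -> R | F f} -> R =>
      sup [set monus (g x) (dsup (@tupling R X F x) u) | x in [set: X]].
    have opub : forall u x, monus (g x) (dsup (@tupling R X F x) u) <= op u.
      move=> u x; apply: (@sup_ub _ _ 1); last by exists x.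
      move=> z [y _ <-]; apply: monus_le => //.
      have := dsup_ge0 (tupling y) u; case/andP: (ug y) => _; lra.
    exists op; split; first split.
    - move=> u hu; apply/andP; split; first by apply: sup_ge0 => z [y _ <-]; apply: monus_ge0.
      apply: sup_le_bound => // z [y _ <-]; apply: monus_le => //.
      have := dsup_ge0 (tupling y) u; case/andP: (ug y) => _; lra.
    - move=> u v hu hv; apply: monus_le; first exact: dsup_ge0.
      suff : op u <= dsup u v + op v by lra.
      apply: sup_le_bound; last first.
        by apply: addr_ge0; [apply: dsup_ge0| apply: sup_ge0 => w [y _ <-]; apply: monus_ge0].
      move=> z [x _ <-]; apply: monus_le.
        by apply: addr_ge0; [apply: dsup_ge0| apply: sup_ge0 => w [y _ <-]; apply: monus_ge0].
      have h1 := dsup_tri (tupling_unit x hF) hu hv.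
      have h2 := opub v x; have h3 := le_monus (g x) (dsup (tupling x) v); lra.
    - apply/funext => y; apply/le_anti/andP; split.
        have h1 := opub (tupling y) y; have h2 := dsup_refl (@tupling R X F y).
        have h3 := le_monus (g y) (dsup (tupling y) (@tupling R X F y)); lra.
      apply: sup_le_bound; last by case/andP: (ug y).
      move=> z [x _ <-]; apply: monus_le; first by case/andP: (ug y).
      rewrite dsup_tupling; have := Hg x y; have := le_monus (g x) (g y); lra.
  move=> [op [[op01 opne] ->]]; split.
    by move=> x; apply: op01; apply: tupling_unit.
  move=> x1 x2; rewrite -dsup_tupling; apply: opne; exact: tupling_unit.
move=> d [d01 [d0 dtri]]; apply/funext => x1; apply/funext => x2.
have gd : gammaS d (fun x => d x x2).
  split; first by move=> x; apply: d01.
  move=> a b; apply: monus_le; first by case/andP: (d01 a b).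
  have := dtri a b x2; have := oplus_le (d a b) (d b x2); lra.
apply/le_anti/andP; split.
  apply: sup_le_bound; last by case/andP: (d01 x1 x2).
  by move=> z [f [uf Hf] <-].
apply: (@le_trans _ _ (monus (d x1 x2) (d x2 x2))).
  have := le_monus (d x1 x2) (d x2 x2); rewrite d0; lra.
apply: (@sup_ub _ _ 1 (monus (d x1 x2) (d x2 x2))).
  by move=> z [f [uf Hf] <-]; apply: monus_le1.
by exists (fun x => d x x2).
Qed.
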